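(* Let $M$ be a monoid, and let $M^0$ be the monoid obtained from $M$ by adjoining a new element $0$ which acts as a zero element. Then $M$ is strongly hyperbolic if and only if $M^0$ is strongly hyperbolic.
   Context: Directed graphs may have loops and multiple edges; $d(u,v)$ is the length of a shortest directed path from $u$ to $v$ ($\infty$ if none). Out-ball $\overrightarrow{\mathcal{B}}_r(x)=\{y : d(x,y)\le r\}$, in-ball $\overleftarrow{\mathcal{B}}_r(x)=\{y : d(y,x)\le r\}$, extended to sets by union. A path $[x_0,\dots,x_n]$ is a geodesic if $n=d(x_0,x_n)$. A directed geodesic triangle is an ordered triple $(p,q,r)$ of geodesics with the end of $p$ equal to the start of $q$ and $p\circ q$ having the same start and end as $r$; it is $\delta$-thin if every vertex of $r$ lies in $\overrightarrow{\mathcal{B}}_\delta(p)\cup\overleftarrow{\mathcal{B}}_\delta(q)$, every vertex of $p$ lies in $\overrightarrow{\mathcal{B}}_\delta(r)\cup\overleftarrow{\mathcal{B}}_\delta(q)$, and every vertex of $q$ lies in $\overrightarrow{\mathcal{B}}_\delta(p)\cup\overleftarrow{\mathcal{B}}_\delta(r)$. A directed graph is strongly $\delta$-hyperbolic if all its directed geodesic triangles are $\delta$-thin. A monoid $M$ is strongly hyperbolic if there exist a finite generating set $A$ and $\delta\ge0$ such that its right Cayley graph w.r.t. $A$ (vertex set $M$, an edge $m\to n$ for each $a\in A$ with $ma=n$) is strongly $\delta$-hyperbolic. *)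

(* Defs.v *)
From Stdlib Require Import List Arith.
Import ListNotations.

Section Graph.
Variables (V : Type) (E : V -> V -> Prop).

(* A directed path [x; y1; ...; yn] is encoded by its start x and the list
   l = [y1; ...; yn] of subsequent vertices; each consecutive pair is an edge.
   Its length is length l, its end is last l x, its vertices are x :: l. *)
Fixpoint is_path (x : V) (l : list V) : Prop :=
  match l with
  | nil => True
  | y :: l' => E x y /\ is_path y l'
  end.

Definition path_end (x : V) (l : list V) : V := last l x.

Definition dist_le (u v : V) (n : nat) : Prop :=
  exists l, is_path u l /\ path_end u l = v /\ length l <= n.

Definition geodesic (x : V) (l : list V) : Prop :=
  is_path x l /\
  forall l', is_path x l' -> path_end x l' = path_end x l -> length l <= length l'.

Definition in_out_ball (d : nat) (x : V) (l : list V) (y : V) : Prop :=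
  exists v, In v (x :: l) /\ dist_le v y d.

Definition in_in_ball (d : nat) (x : V) (l : list V) (y : V) : Prop :=
  exists v, In v (x :: l) /\ dist_le y v d.

Definition geodesic_triangle (x : V) (lp lq lr : list V) : Prop :=
  geodesic x lp /\ geodesic (path_end x lp) lq /\ geodesic x lr /\
  path_end x lr = path_end (path_end x lp) lq.

Definition thin_triangle (d : nat) (x : V) (lp lq lr : list V) : Prop :=
  let y := path_end x lp in
  (forall v, In v (x :: lr) -> in_out_ball d x lp v \/ in_in_ball d y lq v) /\
  (forall v, In v (x :: lp) -> in_out_ball d x lr v \/ in_in_ball d y lq v) /\
  (forall v, In v (y :: lq) -> in_out_ball d x lp v \/ in_in_ball d x lr v).

Definition strongly_hyperbolic_graph (d : nat) : Prop :=
  forall x lp lq lr, geodesic_triangle x lp lq lr -> thin_triangle d x lp lq lr.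

End Graph.

Arguments is_path {V} E x l.
Arguments path_end {V} x l.
Arguments dist_le {V} E u v n.
Arguments geodesic {V} E x l.
Arguments in_out_ball {V} E d x l y.
Arguments in_in_ball {V} E d x l y.
Arguments geodesic_triangle {V} E x lp lq lr.
Arguments thin_triangle {V} E d x lp lq lr.
Arguments strongly_hyperbolic_graph {V} E d.

Definition is_monoid {M : Type} (mul : M -> M -> M) (one : M) : Prop :=
  (forall a b c, mul a (mul b c) = mul (mul a b) c) /\
  (forall a, mul one a = a) /\ (forall a, mul a one = a).

Definition generates {M : Type} (mul : M -> M -> M) (one : M) (A : list M) : Prop :=
  forall m, exists w, (forall a, In a w -> In a A) /\ fold_right mul one w = m.

Definition cayley_edge {M : Type} (mul : M -> M -> M) (A : list M) (m n : M) : Prop :=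
  exists a, In a A /\ mul m a = n.

Definition strongly_hyperbolic_monoid {M : Type} (mul : M -> M -> M) (one : M) : Prop :=
  exists (A : list M) (d : nat),
    generates mul one A /\ strongly_hyperbolic_graph (cayley_edge mul A) d.

(* M^0 : adjoin a new zero element (None) to M. *)
Definition mul0 {M : Type} (mul : M -> M -> M) (a b : option M) : option M :=
  match a, b with
  | Some x, Some y => Some (mul x y)
  | _, _ => None
  end.

Definition one0 {M : Type} (one : M) : option M := Some one.

(* Main.v *)
Require Import Defs.
From Stdlib Require Import List Arith Lia.
Import ListNotations.

Lemma last_cons' {T : Type} (l : list T) : forall (a d : T), last (a :: l) d = last l a.
Proof.
  induction l as [|b l IH]; intros a d; simpl; auto.
  specialize (IH b d). specialize (IH) as IH1.
  change (last (b :: l) d = last (b :: l) a).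
  rewrite IH. clear IH IH1. revert b. induction l; intros; simpl; auto.
  destruct l; auto.
Qed.

Lemma end_cons {T : Type} (x y : T) l : path_end x (y :: l) = path_end y l.
Proof. unfold path_end. apply last_cons'. Qed.

Lemma end_in {T : Type} (l : list T) : forall x, In (path_end x l) (x :: l).
Proof.
  induction l; intros x. simpl. auto.
  rewrite end_cons. right. apply IHl.
Qed.

Lemma dist_refl {T : Type} (E : T -> T -> Prop) v n : dist_le E v v n.
Proof. exists []. simpl. repeat split; auto. lia. Qed.

Lemma dist_mono {T : Type} (E : T -> T -> Prop) u v n m :
  n <= m -> dist_le E u v n -> dist_le E u v m.
Proof. intros H [l [H1 [H2 H3]]]. exists l. repeat split; auto. lia. Qed.

Lemma thin_mono {T : Type} (E : T -> T -> Prop) d d' x lp lq lr :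
  d <= d' -> thin_triangle E d x lp lq lr -> thin_triangle E d' x lp lq lr.
Proof.
  intros Hd [H1 [H2 H3]].
  assert (Ho : forall a b c, in_out_ball E d a b c -> in_out_ball E d' a b c).
  { intros a b c [w [Hw1 Hw2]]. exists w. split; auto. eapply dist_mono; eauto. }
  assert (Hi : forall a b c, in_in_ball E d a b c -> in_in_ball E d' a b c).
  { intros a b c [w [Hw1 Hw2]]. exists w. split; auto. eapply dist_mono; eauto. }
  split; [|split]; intros v Hv;
  [destruct (H1 v Hv) | destruct (H2 v Hv) | destruct (H3 v Hv)]; auto.
Qed.

Lemma map_some_inj {T : Type} : forall (l l' : list T), map Some l = map Some l' -> l = l'.
Proof.
  induction l; destruct l'; simpl; intros H; try discriminate; auto.
  inversion H. f_equal. auto.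
Qed.

Section Transfer.
Variables (V : Type) (E : V -> V -> Prop) (E0 : option V -> option V -> Prop).
Hypothesis HS : forall a b, E0 (Some a) (Some b) <-> E a b.
Hypothesis HN : forall w, E0 None w -> w = None.

Lemma path_None : forall l, is_path E0 None l -> path_end None l = None.
Proof.
  induction l; intros. reflexivity.
  destruct H as [H1 H2]. apply HN in H1; subst. rewrite end_cons. auto.
Qed.

Lemma map_end : forall (l : list V) (x : V), path_end (Some x) (map Some l) = Some (path_end x l).
Proof.
  induction l; intros. reflexivity. simpl map. rewrite !end_cons. auto.
Qed.

Lemma lift_path : forall l x, is_path E x l -> is_path E0 (Some x) (map Some l).
Proof.
  induction l; simpl; intros; auto. destruct H; split; auto. apply HS; auto.
Qed.

Lemma lower_path : forall l0 x0 z, is_path E0 x0 l0 -> path_end x0 l0 = Some z ->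
  exists x l, x0 = Some x /\ l0 = map Some l /\ is_path E x l.
Proof.
  induction l0; intros x0 z H H0.
  - unfold path_end in H0; simpl in H0. subst. exists z, []. simpl. auto.
  - destruct H as [He Hp]. rewrite end_cons in H0.
    destruct (IHl0 _ _ Hp H0) as [a' [l [-> [-> Hl]]]].
    destruct x0 as [x|].
    + exists x, (a' :: l). simpl. repeat split; auto. apply HS; auto.
    + apply HN in He. discriminate.
Qed.

Lemma dist_iff u v n : dist_le E0 (Some u) (Some v) n <-> dist_le E u v n.
Proof.
  split.
  - intros [l0 [H1 [H2 H3]]].
    destruct (lower_path _ _ _ H1 H2) as [x [l [Hx [-> Hl]]]]. inversion Hx; subst.
    exists l. rewrite map_end in H2. inversion H2. rewrite length_map in H3. auto.
  - intros [l [H1 [H2 H3]]]. exists (map Some l). rewrite map_end, length_map.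
    repeat split; auto. apply lift_path; auto. congruence.
Qed.

Lemma geo_iff x l : geodesic E0 (Some x) (map Some l) <-> geodesic E x l.
Proof.
  split.
  - intros [H1 H2]. split.
    + destruct (lower_path _ _ _ H1 (map_end l x)) as [x' [l' [Hx [Hl Hp]]]].
      inversion Hx; subst. apply map_some_inj in Hl. subst; auto.
    + intros l' Hp He. specialize (H2 (map Some l') (lift_path _ _ Hp)).
      rewrite !map_end, !length_map in H2. apply H2. congruence.
  - intros [H1 H2]. split. apply lift_path; auto.
    intros l0 Hp He. rewrite map_end in He.
    destruct (lower_path _ _ _ Hp He) as [x' [l' [Hx [-> Hl]]]].
    inversion Hx; subst. rewrite map_end in He. inversion He.
    rewrite !length_map. apply H2; auto.
Qed.

Lemma in_map_some (x : V) (l : list V) (w : option V) : In w (Some x :: map Some l) -> exists w', w = Some w' /\ In w' (x :: l).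
Proof.
  change (Some x :: map Some l) with (map Some (x :: l)).
  intros H. apply in_map_iff in H. destruct H as [w' [H1 H2]]. eauto.
Qed.

Lemma in_some_map (x : V) (l : list V) (w : V) : In w (x :: l) -> In (Some w) (Some x :: map Some l).
Proof.
  change (Some x :: map Some l) with (map Some (x :: l)). apply in_map.
Qed.

Lemma out_iff d x l y : in_out_ball E0 d (Some x) (map Some l) (Some y) <-> in_out_ball E d x l y.
Proof.
  split.
  - intros [w [H1 H2]]. destruct (in_map_some _ _ _ H1) as [w' [-> H]].
    exists w'. split; auto. apply dist_iff; auto.
  - intros [w [H1 H2]]. exists (Some w). split. apply in_some_map; auto. apply dist_iff; auto.
Qed.

Lemma inb_iff d x l y : in_in_ball E0 d (Some x) (map Some l) (Some y) <-> in_in_ball E d x l y.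
Proof.
  split.
  - intros [w [H1 H2]]. destruct (in_map_some _ _ _ H1) as [w' [-> H]].
    exists w'. split; auto. apply dist_iff; auto.
  - intros [w [H1 H2]]. exists (Some w). split. apply in_some_map; auto. apply dist_iff; auto.
Qed.

Lemma forall_iff (P : option V -> Prop) (Q : V -> Prop) (x : V) (l : list V) :
  (forall v, P (Some v) <-> Q v) ->
  ((forall v, In v (Some x :: map Some l) -> P v) <-> (forall v, In v (x :: l) -> Q v)).
Proof.
  intros HPQ. split.
  - intros H v Hv. apply HPQ. apply H. apply in_some_map; auto.
  - intros H v Hv. destruct (in_map_some _ _ _ Hv) as [w [-> Hw]]. apply HPQ; auto.
Qed.

Lemma thin_iff d x lp lq lr :
  thin_triangle E0 d (Some x) (map Some lp) (map Some lq) (map Some lr) <->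
  thin_triangle E d x lp lq lr.
Proof.
  unfold thin_triangle. rewrite map_end.
  rewrite (forall_iff _ (fun v => in_out_ball E d x lp v \/ in_in_ball E d (path_end x lp) lq v)).
  2:{ intros v. rewrite out_iff, inb_iff. tauto. }
  rewrite (forall_iff _ (fun v => in_out_ball E d x lr v \/ in_in_ball E d (path_end x lp) lq v)).
  2:{ intros v. rewrite out_iff, inb_iff. tauto. }
  rewrite (forall_iff _ (fun v => in_out_ball E d x lp v \/ in_in_ball E d x lr v)).
  2:{ intros v. rewrite out_iff, inb_iff. tauto. }
  tauto.
Qed.

Lemma tri_iff x lp lq lr :
  geodesic_triangle E0 (Some x) (map Some lp) (map Some lq) (map Some lr) <->
  geodesic_triangle E x lp lq lr.
Proof.
  unfold geodesic_triangle. rewrite !map_end, !geo_iff. split.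
  - intros [? [? [? H]]]. inversion H. auto.
  - intros [? [? [? H]]]. rewrite H. auto.
Qed.

Lemma hyp_down d : strongly_hyperbolic_graph E0 d -> strongly_hyperbolic_graph E d.
Proof.
  intros H x lp lq lr Ht. apply thin_iff. apply H. apply tri_iff; auto.
Qed.

Lemma hyp_up_some d x0 lp0 lq0 lr0 z :
  strongly_hyperbolic_graph E d -> geodesic_triangle E0 x0 lp0 lq0 lr0 ->
  path_end x0 lr0 = Some z -> thin_triangle E0 d x0 lp0 lq0 lr0.
Proof.
  intros H Ht Hz. pose proof Ht as [[Hp _] [[Hq _] [[Hr _] He]]].
  destruct (lower_path _ _ _ Hr Hz) as [x [lr [-> [-> _]]]].
  rewrite He in Hz.
  destruct (path_end (Some x) lp0) as [y|] eqn:Hy.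
  2:{ exfalso. rewrite path_None in Hz; auto. discriminate. }
  destruct (lower_path _ _ _ Hp Hy) as [x' [lp [Hx [-> _]]]]. inversion Hx; subst x'.
  rewrite map_end in Hy. inversion Hy. subst y. clear Hy.

  destruct (lower_path _ _ _ Hq Hz) as [y' [lq [Hy' [-> _]]]]. inversion Hy'; subst y'.
  apply thin_iff. apply H. apply tri_iff. auto.
Qed.

End Transfer.

Lemma thin_none {T : Type} (E : T -> T -> Prop) (z : T) d x lp lq lr :
  (forall v, dist_le E v z d) -> geodesic_triangle E x lp lq lr ->
  path_end x lr = z -> thin_triangle E d x lp lq lr.
Proof.
  intros Hd [_ [_ [_ He]]] Hz.
  assert (H1 : forall v, in_in_ball E d (path_end x lp) lq v).
  { intros v. exists z. split; auto. rewrite <- Hz, He. apply end_in. }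
  assert (H2 : forall v, in_in_ball E d x lr v).
  { intros v. exists z. split; auto. rewrite <- Hz. apply end_in. }
  split; [|split]; intros; right; auto.
Qed.

Lemma edge_none {M : Type} (mul : M -> M -> M) A w :
  cayley_edge (mul0 mul) A None w -> w = None.
Proof. intros [a [_ H]]. simpl in H. auto. Qed.

Definition somes {M : Type} (A0 : list (option M)) : list M :=
  flat_map (fun o => match o with Some a => [a] | None => [] end) A0.

Lemma in_somes {M : Type} (A0 : list (option M)) a : In a (somes A0) <-> In (Some a) A0.
Proof.
  unfold somes. rewrite in_flat_map. split.
  - intros [o [H1 H2]]. destruct o; simpl in H2; [destruct H2 as [->|[]]|destruct H2]; auto.
  - intros H. exists (Some a). simpl. auto.
Qed.

Lemma edge_somes {M : Type} (mul : M -> M -> M) A0 a b :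
  cayley_edge (mul0 mul) A0 (Some a) (Some b) <-> cayley_edge mul (somes A0) a b.
Proof.
  split.
  - intros [o [H1 H2]]. destruct o as [c|]; simpl in H2; try discriminate.
    inversion H2. exists c. split; auto. apply in_somes; auto.
  - intros [c [H1 H2]]. exists (Some c). split. apply in_somes; auto. simpl. congruence.
Qed.

Lemma edge_ext {M : Type} (mul : M -> M -> M) A a b :
  cayley_edge (mul0 mul) (map Some A ++ [None]) (Some a) (Some b) <-> cayley_edge mul A a b.
Proof.
  rewrite edge_somes. unfold cayley_edge.
  assert (Hs : forall c, In c (somes (map Some A ++ [None])) <-> In c A).
  { intros c. rewrite in_somes, in_app_iff, in_map_iff. simpl. split.
    - intros [[c' [H1 H2]]|[H|[]]]; [inversion H1; subst; auto|discriminate].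
    - intros H. left. eauto. }
  split; intros [c [H1 H2]]; exists c; split; auto; apply Hs; auto.
Qed.

Lemma fold_some {M : Type} (mul : M -> M -> M) one (w : list M) :
  fold_right (mul0 mul) (Some one) (map Some w) = Some (fold_right mul one w).
Proof. induction w; simpl; auto. rewrite IHw. reflexivity. Qed.

Lemma fold_lower {M : Type} (mul : M -> M -> M) one : forall (w : list (option M)) m,
  fold_right (mul0 mul) (Some one) w = Some m ->
  exists w', w = map Some w' /\ fold_right mul one w' = m.
Proof.
  induction w; intros m H; simpl in H.
  - inversion H. exists []. auto.
  - destruct a as [a|]; [|discriminate].
    destruct (fold_right (mul0 mul) (Some one) w) as [m'|] eqn:E; [|discriminate].
    simpl in H. inversion H. destruct (IHw m' eq_refl) as [w' [-> Hw]].
    exists (a :: w'). simpl. split; auto. congruence.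
Qed.

Theorem proposition4p7 (M : Type) (mul : M -> M -> M) (one : M)
  (HM : is_monoid mul one) :
  strongly_hyperbolic_monoid mul one <->
  strongly_hyperbolic_monoid (mul0 mul) (one0 one).
Proof.
  split.
  - intros [A [d [Hg Hh]]]. exists (map Some A ++ [None]), (S d). split.
    + intros [m|].
      * destruct (Hg m) as [w [Hw1 Hw2]]. exists (map Some w). split.
        -- intros a Ha. apply in_map_iff in Ha. destruct Ha as [b [<- Hb]].
           apply in_app_iff. left. apply in_map. auto.
        -- unfold one0. rewrite fold_some. congruence.
      * exists [None]. split; auto. intros a [<-|[]]. apply in_app_iff. right. simpl; auto.
    + intros x lp lq lr Ht.
      destruct (path_end x lr) as [z|] eqn:Hz.
      * apply (thin_mono _ d). lia.
        eapply (hyp_up_some M (cayley_edge mul A)); eauto.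
        -- intros; apply edge_ext.
        -- apply edge_none.
      * apply (thin_none _ None); auto. intros [v|].
        -- exists [None]. simpl. repeat split; try lia.
           exists None. split; auto. apply in_app_iff. right. simpl; auto.
        -- apply dist_refl.
  - intros [A0 [d [Hg Hh]]]. exists (somes A0), d. split.
    + intros m. destruct (Hg (Some m)) as [w [Hw1 Hw2]].
      destruct (fold_lower mul one w m Hw2) as [w' [-> Hw']].
      exists w'. split; auto. intros a Ha. apply in_somes. apply Hw1. apply in_map; auto.
    + eapply (hyp_down M _ (cayley_edge (mul0 mul) A0)); eauto.
      * intros; apply edge_somes.
      * apply edge_none.
Qed.
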